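(* Let $\mathbb{K}\in\{\mathbb{R},\mathbb{C}\}$, let $X$ be a Hausdorff topological vector space over $\mathbb{K}$ whose topology is weak, and let $T:X\to X$ be a continuous linear operator. Then the following conditions are equivalent: (1) the dual operator $T'$ has no non-trivial finite dimensional invariant subspaces; (2) $T$ is transitive; (3) $T$ is mixing; (4) for any non-empty open subsets $U$ and $V$ of $X$, there is $k\in\mathbb{N}$ such that $p(T)(U)\cap V\neq\varnothing$ for every polynomial $p$ with coefficients in $\mathbb{K}$ of degree $\geq k$.
   Context: The topology $\tau$ of a topological vector space $X$ is called weak if there is a linear space $Y$ of linear functionals on $X$ separating the points of $X$ such that $\tau$ is exactly the weakest topology making every $f\in Y$ continuous. $X'$ denotes the space of continuous linear functionals on $X$, and the dual operator $T':X'\to X'$ is $(T'f)(x)=f(Tx)$. A non-trivial subspace means a subspace different from $\{0\}$; a subspace $L$ is invariant for $T'$ if $T'(L)\subseteq L$. $T$ is transitive if for any non-empty open $U,V\subseteq X$ there is $n\in\mathbb{N}$ with $T^n(U)\cap V\neq\varnothing$. $T$ is mixing if for any non-empty open $U,V\subseteq X$ there is $n\in\mathbb{N}$ such that $T^m(U)\cap V\neq\varnothing$ for every $m\geq n$. *)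

(* Defs.v *)
From HB Require Import structures.
From mathcomp Require Import all_boot all_order all_algebra.
From mathcomp Require Import all_classical all_reals all_analysis.
From mathcomp Require Import complex.
Set Implicit Arguments. Unset Strict Implicit. Unset Printing Implicit Defensive.
Import Order.TTheory GRing.Theory Num.Theory.
Import numFieldNormedType.Exports.
Import ComplexField.
Local Open Scope classical_set_scope.
Local Open Scope ring_scope.

(* The scalar field K in {R, C}: [RorC R true] is the real field R,
   [RorC R false] is the complex field C = R[i] (complex numbers over R),
   both with their usual norm topology (given by numFieldNormedType). *)
Definition RorC (R : realType) (b : bool) : numFieldType :=
  if b then (R : numFieldType) else (R[i] : numFieldType).

Section Defs.
Variables (K : numFieldType) (X : topologicalLmodType K).

Definition lin_functional (f : X -> K) : Prop :=
  forall (a : K) (x y : X), f (a *: x + y) = a * f x + f y.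

Definition functional_subspace (Y : set (X -> K)) : Prop :=
  (forall f, Y f -> lin_functional f) /\
  Y (fun _ => 0) /\
  (forall (a : K) f g, Y f -> Y g -> Y (fun x => a * f x + g x)).

Definition separates_points (Y : set (X -> K)) : Prop :=
  forall x y : X, x <> y -> exists f, Y f /\ f x <> f y.

(* The topology of X is exactly the weakest topology making every f in Y
   continuous, i.e. the topology generated by the subbasis
   { f^-1(W) | f in Y, W open in K }: a set is open iff each of its points
   lies in a finite intersection of subbasic sets contained in it. *)
Definition topology_is_weak_for (Y : set (X -> K)) : Prop :=
  forall U : set X, open U <->
    (forall x, U x -> exists (n : nat) (fs : 'I_n -> (X -> K)) (Ws : 'I_n -> set K),
       (forall i, Y (fs i)) /\ (forall i, open (Ws i)) /\
       (forall i, Ws i (fs i x)) /\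
       [set y | forall i, Ws i (fs i y)] `<=` U).

Definition weak_topology_space : Prop :=
  exists Y : set (X -> K),
    functional_subspace Y /\ separates_points Y /\ topology_is_weak_for Y.

Definition in_dual (f : X -> K) : Prop := lin_functional f /\ continuous f.

Definition nontriv_findim_dual_invariant (T : X -> X) (L : set (X -> K)) : Prop :=
  (forall f, L f -> in_dual f) /\
  L (fun _ => 0) /\
  (forall (a : K) f g, L f -> L g -> L (fun x => a * f x + g x)) /\
  (exists (n : nat) (fs : 'I_n -> (X -> K)),
     (forall i, L (fs i)) /\
     (forall f, L f -> exists c : 'I_n -> K, f = fun x => \sum_(i < n) c i * fs i x)) /\
  (exists f, L f /\ f <> (fun _ => 0)) /\
  (forall f, L f -> L (f \o T)).

Definition poly_op (p : {poly K}) (T : X -> X) : X -> X :=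
  fun x => \sum_(i < size p) p`_i *: iter i T x.

Definition transitive_op (T : X -> X) : Prop :=
  forall U V : set X, open U -> open V -> U !=set0 -> V !=set0 ->
    exists n : nat, (0 < n)%N /\ (iter n T @` U) `&` V !=set0.

Definition mixing_op (T : X -> X) : Prop :=
  forall U V : set X, open U -> open V -> U !=set0 -> V !=set0 ->
    exists n : nat, forall m : nat, (n <= m)%N -> (iter m T @` U) `&` V !=set0.

(* condition (4): deg p >= k, i.e. size p > k (this excludes p = 0) *)
Definition poly_mixing_op (T : X -> X) : Prop :=
  forall U V : set X, open U -> open V -> U !=set0 -> V !=set0 ->
    exists k : nat, forall p : {poly K}, (k < size p)%N ->
      (poly_op p T @` U) `&` V !=set0.

End Defs.

(* Main.v *)
Require Import Defs.
From HB Require Import structures.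
From mathcomp Require Import all_boot all_order all_algebra.
From mathcomp Require Import all_classical all_reals all_analysis.
From mathcomp Require Import complex.
From mathcomp Require Import ring lra zify.
Import ComplexField.
Import Order.TTheory GRing.Theory Num.Theory.
Import numFieldNormedType.Exports.
Local Open Scope classical_set_scope.
Local Open Scope ring_scope.
Set Implicit Arguments. Unset Strict Implicit. Unset Printing Implicit Defensive.
Set Warnings "-notation-overridden,-ambiguous-paths,-notation-incompatible-prefix".

Section Act.
Variables (F : comNzRingType) (X : Type) (T : X -> X).
Implicit Types (p q : {poly F}) (h : X -> F) (x : X).

Definition act (q : {poly F}) (h : X -> F) : X -> F :=
  fun x => \sum_(i < size q) q`_i * h (iter i T x).

Lemma act_widen n q h x : (size q <= n)%N ->
  act q h x = \sum_(i < n) q`_i * h (iter i T x).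
Proof.
move=> Hn; rewrite /act (big_ord_widen n (fun i => q`_i * h (iter i T x)) Hn).
rewrite big_mkcond /=; apply: eq_bigr => i _; case: ifP => // /negbT.
by rewrite -leqNgt => Hi; rewrite nth_default // mul0r.
Qed.

Lemma act_ext q h1 h2 x : (forall y, h1 y = h2 y) -> act q h1 x = act q h2 x.
Proof. by move=> H; apply: eq_bigr => i _; rewrite H. Qed.

Lemma actD p q h x : act (p + q) h x = act p h x + act q h x.
Proof.
rewrite (@act_widen (maxn (size p) (size q))) ?size_polyD //.
rewrite (@act_widen (maxn (size p) (size q)) p) ?leq_maxl //.
rewrite (@act_widen (maxn (size p) (size q)) q) ?leq_maxr //.
by rewrite -big_split /=; apply: eq_bigr => i _; rewrite coefD mulrDl.
Qed.

Lemma actZ c q h x : act (c *: q) h x = c * act q h x.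
Proof.
rewrite (@act_widen (size q)) ?size_scale_leq // mulr_sumr.
by apply: eq_bigr => i _; rewrite coefZ mulrA.
Qed.

Lemma actN q h x : act (- q) h x = - act q h x.
Proof. by rewrite -scaleN1r actZ mulN1r. Qed.

Lemma act0p h x : act 0 h x = 0.
Proof. by rewrite /act size_poly0 big_ord0. Qed.

Lemma actC c h x : act c%:P h x = c * h x.
Proof.
rewrite (@act_widen 1) ?size_polyC ?leq_b1 // big_ord1 coefC /=.
by [].
Qed.

Lemma act_comp q h x : act q h (T x) = act q (fun y => h (T y)) x.
Proof. by apply: eq_bigr => i _; rewrite -iterSr. Qed.

Lemma actXM q h x : act ('X * q) h x = act q (fun y => h (T y)) x.
Proof.
rewrite (@act_widen (size q).+1); last first.
  by have [->|nq] := eqVneq q 0; rewrite ?mulr0 ?size_poly0 // mulrC size_mulX.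
rewrite big_ord_recl coefXM eqxx mul0r add0r.
rewrite (@act_widen (size q)) //; apply: eq_bigr => i _.
by rewrite coefXM /= add0n.
Qed.

Lemma actX h x : act 'X h x = h (T x).
Proof. by rewrite -(mulr1 'X) actXM actC mul1r. Qed.

Lemma actM p q h x : act (p * q) h x = act p (act q h) x.
Proof.
elim/poly_ind: p q h x => [|p c IH] q h x.
  by rewrite mul0r !act0p.
rewrite mulrDl -mulrA mul_polyC actD actZ IH.
rewrite actD actC [p * 'X]mulrC actXM.
congr (_ + _); apply: act_ext => y; rewrite actXM act_comp //.
Qed.

Lemma act1 h x : act 1 h x = h x.
Proof. by rewrite actC mul1r. Qed.

Lemma actXn n h x : act 'X^n h x = h (iter n T x).
Proof.
elim: n h x => [|n IH] h x; first by rewrite expr0 act1.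
by rewrite exprS actM actX IH -iterSr.
Qed.

Lemma act_lin q a h1 h2 x :
  act q (fun y => a * h1 y + h2 y) x = a * act q h1 x + act q h2 x.
Proof.
rewrite /act mulr_sumr -big_split /=; apply: eq_bigr => i _.
by rewrite mulrDr mulrCA.
Qed.

Lemma act_opp q h x : act q (fun y => - h y) x = - act q h x.
Proof.
rewrite /act -sumrN; apply: eq_bigr => i _; by rewrite mulrN.
Qed.

Lemma act_0 q x : act q (fun _ => 0) x = 0.
Proof. by rewrite /act big1 // => i _; rewrite mulr0. Qed.

Lemma act_sumh q n (G : nat -> X -> F) x :
  act q (fun y => \sum_(i < n) G i y) x = \sum_(i < n) act q (G i) x.
Proof.
rewrite /act; under eq_bigr do rewrite mulr_sumr.
by rewrite exchange_big.
Qed.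

Lemma act_sump n (P : nat -> {poly F}) h x :
  act (\sum_(i < n) P i) h x = \sum_(i < n) act (P i) h x.
Proof.
elim: n => [|n IH]; first by rewrite !big_ord0 act0p.
by rewrite !big_ord_recr /= actD IH.
Qed.

End Act.

Section Cont.
Variables (S : topologicalType) (K : numFieldType).
Implicit Types (f g : S -> K).
Lemma cont_cst (c : K) : continuous (fun _ : S => c).
Proof. by move=> x; apply: cvg_cst. Qed.

Lemma cont_comb (a : K) f g : continuous f -> continuous g ->
  continuous (fun x => a * f x + g x).
Proof.
move=> cf cg x.
exact: (cvgD (cvgM (cvg_cst a) (cf x)) (cg x)).
Qed.

Lemma cont_sum n (G : nat -> S -> K) : (forall i, continuous (G i)) ->
  continuous (fun x => \sum_(i < n) G i x).
Proof.
move=> cG; elim: n => [|n IH].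
  by under eq_fun do rewrite big_ord0; exact: cont_cst.
under eq_fun do rewrite big_ord_recr /=.
have := @cont_comb 1 _ _ IH (cG n).
by under eq_fun do rewrite mul1r.
Qed.

End Cont.

Section Basics.
Variables (K : numFieldType) (X : topologicalLmodType K).
Implicit Types (f g h : X -> K) (x y : X).

Lemma lf0 f : lin_functional f -> f 0 = 0.
Proof.
move=> lf; have H := lf 1 0 0; rewrite scaler0 addr0 mul1r in H.
by apply: (addrI (f 0)); rewrite addr0 -H.
Qed.

Lemma lfD f x y : lin_functional f -> f (x + y) = f x + f y.
Proof. by move=> lf; have := lf 1 x y; rewrite scale1r mul1r. Qed.

Lemma lfZ f a x : lin_functional f -> f (a *: x) = a * f x.
Proof. by move=> lf; rewrite -[_ *: _]addr0 lf lf0 // addr0. Qed.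

Lemma lf_sum f n (a : nat -> K) (v : nat -> X) : lin_functional f ->
  f (\sum_(i < n) a i *: v i) = \sum_(i < n) a i * f (v i).
Proof.
move=> lf; elim: n => [|n IH]; first by rewrite !big_ord0 lf0.
by rewrite !big_ord_recr /= lfD // IH lfZ.
Qed.

Lemma lf_comb (a : K) f g : lin_functional f -> lin_functional g ->
  lin_functional (fun x => a * f x + g x).
Proof.
by move=> lf lg b x y; rewrite lf lg; ring.
Qed.

Lemma dual_comb (a : K) f g : in_dual f -> in_dual g ->
  in_dual (fun x => a * f x + g x).
Proof.
by move=> [lf cf] [lg cg]; split; [exact: lf_comb | exact: cont_comb].
Qed.

Lemma dual_0 : in_dual (fun _ : X => 0 : K).
Proof. by split; [move=> a x y; rewrite mulr0 addr0 | exact: cont_cst]. Qed.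

Lemma dual_ext {f g} : in_dual f -> (forall x, f x = g x) -> in_dual g.
Proof. by move=> d e; have <- : f = g by apply: funext. Qed.

Lemma dual_sum n (u : nat -> K) (G : nat -> X -> K) :
  (forall i, in_dual (G i)) -> in_dual (fun x => \sum_(i < n) u i * G i x).
Proof.
move=> dG; elim: n => [|n IH].
  by apply: (dual_ext dual_0) => x; rewrite big_ord0.
apply: (dual_ext (@dual_comb (u n) _ _ (dG n) IH)) => x.
by rewrite big_ord_recr /= addrC.
Qed.

Variable T : X -> X.
Hypotheses (linT : linear T) (contT : continuous T).

Lemma iterT_lin n a x y : iter n T (a *: x + y) = a *: iter n T x + iter n T y.
Proof. by elim: n => [|n IH] //=; rewrite IH linT. Qed.

Lemma iterT_cont n : continuous (iter n T).
Proof.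
elim: n => [|n IH] /=; first by move=> x; apply: cvg_id.
by move=> x; apply: continuous_comp; [exact: IH | exact: contT].
Qed.

Lemma dual_iter n f : in_dual f -> in_dual (fun x => f (iter n T x)).
Proof.
move=> [lf cf]; split.
  by move=> a x y; rewrite iterT_lin lf.
by move=> x; apply: continuous_comp; [exact: iterT_cont | exact: cf].
Qed.

Lemma dual_act q f : in_dual f -> in_dual (act T q f).
Proof.
move=> df; exact: (dual_sum (size q) (fun i => q`_i) (fun i => dual_iter i df)).
Qed.

Lemma lf_poly_op f p x : lin_functional f -> f (poly_op p T x) = act T p f x.
Proof. by move=> lf; rewrite /poly_op (@lf_sum f (size p) (fun i => p`_i) (fun i => iter i T x) lf). Qed.

End Basics.

Section TF.
Variables (K : numFieldType) (X : topologicalLmodType K) (T : X -> X).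
Hypotheses (linT : linear T) (contT : continuous T).

Definition tfree := forall (h : X -> K) (q : {poly K}), in_dual h -> q != 0 ->
  (forall x, act T q h x = 0) -> forall x, h x = 0.

Lemma tf_of_noL : ~ (exists L, nontriv_findim_dual_invariant T L) -> tfree.
Proof.
move=> noL h q dh q0 hq x; apply: contrapT => hx; apply: noL.
exists (fun k => exists r, k = act T r h); split.
  by move=> f [r ->]; exact: dual_act.
split.
  by exists 0; apply: funext => y; rewrite act0p.
split.
  move=> a f g [r1 ->] [r2 ->]; exists (a *: r1 + r2).
  by apply: funext => y; rewrite actD actZ.
split.
  exists (size q).-1, (fun i y => h (iter i T y)); split.
    by move=> i; exists 'X^i; apply: funext => y; rewrite actXn.
  move=> f [r ->]; exists (fun i => (r %% q)`_i); apply: funext => y.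
  rewrite {1}(divp_eq r q) actD actM.
  rewrite (@act_ext _ _ _ _ _ (fun _ => 0)) // act_0 add0r.
  apply: act_widen.
  have := ltn_modp r q; rewrite q0 => H.
  by rewrite -ltnS prednK // lt0n size_poly_eq0.
split.
  exists h; split; first by exists 1; apply: funext => y; rewrite act1.
  by move=> e; apply: hx; rewrite e.
move=> f [r ->]; exists ('X * r); apply: funext => y.
by rewrite /= act_comp actXM.
Qed.

End TF.

Section Solve.
Variables (K : numFieldType) (X : topologicalLmodType K).

Lemma sum_shift n (F : nat -> K) :
  \sum_(l < n.+1) F l = F 0%N + \sum_(l < n) F l.+1.
Proof. by rewrite big_ord_recl; congr (_ + _); apply: eq_bigr => i _; rewrite lift0. Qed.

Lemma solve_sys N : forall (phi : nat -> X -> K) (c : nat -> K),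
  (forall l, lin_functional (phi l)) ->
  (forall w : nat -> K, (forall x, \sum_(l < N) w l * phi l x = 0) ->
      \sum_(l < N) w l * c l = 0) ->
  exists x, forall l, (l < N)%N -> phi l x = c l.
Proof.
elim: N => [|N IH] phi c lphi H.
  by exists 0.
case: (pselect (exists e, phi 0%N e != 0)) => [[e he]|ne].
  pose e' := (phi 0%N e)^-1 *: e.
  have he' : phi 0%N e' = 1 by rewrite lfZ // mulVf.
  pose psi l x := phi l.+1 x - phi 0%N x * phi l.+1 e'.
  pose c' l := c l.+1 - c 0%N * phi l.+1 e'.
  have lpsi : forall l, lin_functional (psi l).
    by move=> l a x y; rewrite /psi !lphi; ring.
  have [x' Hx'] : exists x, forall l, (l < N)%N -> psi l x = c' l.
    apply: IH => // w Hw.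
    pose W := fun l => if l is k.+1 then w k
                        else - \sum_(k < N) w k * phi k.+1 e'.
    have HW := H W.
    have : \sum_(l < N.+1) W l * c l = 0.
      apply: HW => x; rewrite (@sum_shift _ (fun l => W l * phi l x)) /W.
      rewrite -[RHS](Hw x) /psi mulNr big_distrl /= -sumrN -big_split /=.
      by apply: eq_bigr => i _; ring.
    rewrite (@sum_shift _ (fun l => W l * c l)) /W.
    have -> : \sum_(l < N) w l * c' l = \sum_(l < N) w l * c l.+1 -
        c 0%N * \sum_(k < N) w k * phi k.+1 e'.
      rewrite /c' mulr_sumr -sumrB; apply: eq_bigr => i _; ring.
    by move=> H1; rewrite -[RHS]H1; ring.
  exists (x' + (c 0%N - phi 0%N x') *: e') => -[_|k Hk].
    by rewrite lfD // lfZ // he'; ring.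
  rewrite lfD // lfZ //.
  have := Hx' k Hk; rewrite /psi /c' => Hk'.
  have -> : phi k.+1 x' = c k.+1 - c 0%N * phi k.+1 e' + phi 0%N x' * phi k.+1 e'.
    by rewrite -Hk'; ring.
  by ring.
have z : forall e, phi 0%N e = 0.
  by move=> e; apply: contrapT => hz; apply: ne; exists e; apply/eqP.
have c0 : c 0%N = 0.
  pose W := fun l : nat => if l is k.+1 then 0 else 1 : K.
  have HW := H W.
  have : \sum_(l < N.+1) W l * c l = 0.
    apply: HW => x; rewrite (@sum_shift _ (fun l => W l * phi l x)) /W.
    by rewrite z mulr0 add0r big1 // => i _; rewrite mul0r.
  rewrite (@sum_shift _ (fun l => W l * c l)) /W big1 ?addr0 ?mul1r //.
  by move=> i _; rewrite mul0r.
have [x Hx] : exists x, forall l, (l < N)%N -> phi l.+1 x = c l.+1.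
  apply: IH => // w Hw.
  pose W := fun l => if l is k.+1 then w k else 0.
  have HW := H W.
  have : \sum_(l < N.+1) W l * c l = 0.
    apply: HW => x; rewrite (@sum_shift _ (fun l => W l * phi l x)) /W.
    by rewrite mul0r add0r Hw.
  by rewrite (@sum_shift _ (fun l => W l * c l)) /W mul0r add0r.
by exists x => -[_|k Hk]; [rewrite z c0 | exact: Hx].
Qed.

End Solve.

Lemma sum_last (V : zmodType) n (F : nat -> V) :
  \sum_(l < n.+1) F l = \sum_(l < n) F l + F n.
Proof. by rewrite big_ord_recr. Qed.

Section Free.
Variables (K : numFieldType) (X : Type) (T : X -> X).

Definition indep r (b : nat -> X -> K) := forall q : nat -> {poly K},
  (forall x, \sum_(i < r) act T (q i) (b i) x = 0) -> forall i, (i < r)%N -> q i = 0.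

Lemma sum_ext_lt r (F G : nat -> K) : (forall i, (i < r)%N -> F i = G i) ->
  \sum_(i < r) F i = \sum_(i < r) G i.
Proof. by move=> H; apply: eq_bigr => i _; apply: H. Qed.

Lemma free_gen N (e : nat -> X -> K) : exists r b c (a : nat -> nat -> {poly K}),
  c != 0 /\ indep r b /\
  forall j, (j < N)%N -> forall x, act T c (e j) x = \sum_(i < r) act T (a j i) (b i) x.
Proof.
elim: N => [|N [r [b [c [a [c0 [ind Hs]]]]]]].
  exists 0%N, (fun _ _ => 0), 1, (fun _ _ => 0); split; first exact: oner_neq0.
  by split.
pose b' i := if i == r then e N else b i.
have sb' : forall (q : nat -> {poly K}) x, \sum_(i < r.+1) act T (q i) (b' i) x =
    \sum_(i < r) act T (q i) (b i) x + act T (q r) (e N) x.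
  move=> q x; rewrite (@sum_last _ _ (fun i => act T (q i) (b' i) x)) /b' eqxx.
  congr (_ + _); apply: eq_bigr => i _; by rewrite ltn_eqF.
case: (pselect (indep r.+1 b')) => [ind'|nind].
  exists r.+1, b', c, (fun j i => if j == N then (if i == r then c else 0)
                                  else if i == r then 0 else a j i).
  split => //; split => //.
  move=> j; rewrite ltnS leq_eqVlt => /orP [/eqP -> | Hj] x.
    rewrite eqxx (sb' (fun i => if i == r then c else 0)) eqxx big1 ?add0r //.
    by move=> i _; rewrite ltn_eqF // act0p.
  rewrite (ltn_eqF Hj) (sb' (fun i => if i == r then 0 else a j i)) eqxx act0p addr0 Hs //.
  by apply: eq_bigr => i _; rewrite /b' ltn_eqF.
have [q [Hq [i [Hi qi]]]] : exists q : nat -> {poly K},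
    (forall x, \sum_(i < r.+1) act T (q i) (b' i) x = 0) /\
    exists i, (i < r.+1)%N /\ q i <> 0.
  apply: contrapT => Hn; apply: nind => q Hq i Hi; apply: contrapT => qi.
  by apply: Hn; exists q; split => //; exists i.
have qr : q r != 0.
  apply/eqP => qr0; apply: qi.
  have : forall x, \sum_(i < r) act T (q i) (b i) x = 0.
    by move=> x; rewrite -[RHS](Hq x) sb' qr0 act0p addr0.
  move/ind => H; move: Hi; rewrite ltnS leq_eqVlt => /orP [/eqP -> // | ]; exact: H.
have HeN : forall y, act T (q r) (e N) y = - \sum_(i < r) act T (q i) (b i) y.
  move=> y; have := Hq y; rewrite sb' => /eqP; rewrite addrC addr_eq0 => /eqP //.
exists r, b, (c * q r), (fun j i => if j == N then - (c * q i) else q r * a j i).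
split; first by rewrite mulf_neq0.
split => //.
move=> j; rewrite ltnS leq_eqVlt => /orP [/eqP -> | Hj] x.
  rewrite actM (act_ext _ _ _ HeN) act_opp (@act_sumh _ _ T c r (fun i => act T (q i) (b i))) -sumrN.
  by apply: eq_bigr => k _; rewrite eqxx actN actM.
rewrite mulrC actM (act_ext _ _ _ (Hs j Hj)) (@act_sumh _ _ T (q r) r (fun i => act T (a j i) (b i))) (ltn_eqF Hj).
by apply: eq_bigr => k _; rewrite actM.
Qed.

End Free.

Section LemmaA.
Variables (K : numFieldType) (X : topologicalLmodType K) (T : X -> X).
Hypotheses (linT : linear T) (contT : continuous T).

Lemma act_add (q : {poly K}) (h1 h2 : X -> K) x :
  act T q (fun y => h1 y + h2 y) x = act T q h1 x + act T q h2 x.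
Proof. by have := act_lin T q 1 h1 h2 x; rewrite mul1r => <-; apply: act_ext => y; rewrite mul1r. Qed.

Lemma act_comb (q : {poly K}) n (v : nat -> K) (G : nat -> X -> K) x :
  act T q (fun y => \sum_(j < n) v j * G j y) x = \sum_(j < n) v j * act T q (G j) x.
Proof.
elim: n => [|n IH].
  by rewrite big_ord0 -[RHS](act_0 T q x); apply: act_ext => y; rewrite big_ord0.
rewrite big_ord_recr /= addrC -IH.
rewrite -(act_lin T q (v n) (G n) (fun y => \sum_(j < n) v j * G j y)).
by apply: act_ext => y; rewrite big_ord_recr /= addrC.
Qed.

Lemma size_comb_le n d (s : nat -> K) (P : nat -> {poly K}) :
  (forall j, (j < n)%N -> (size (P j) <= d)%N) ->
  (size (\sum_(j < n) s j *: P j)%R <= d)%N.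
Proof.
elim: n => [|n IH] H; first by rewrite big_ord0 size_poly0.
rewrite big_ord_recr /=; apply: leq_trans (size_polyD _ _) _.
rewrite geq_max IH; last by move=> j Hj; apply: H; apply: ltnW.
by apply: leq_trans (size_scale_leq _ _) _; apply: H.
Qed.

Lemma comb_poly n r (v : nat -> K) (A : nat -> nat -> {poly K}) (b : nat -> X -> K) y :
  \sum_(j < n) v j * \sum_(i < r) act T (A j i) (b i) y =
  \sum_(i < r) act T (\sum_(j < n) v j *: A j i) (b i) y.
Proof.
under eq_bigr do rewrite mulr_sumr.
rewrite exchange_big /=; apply: eq_bigr => i _.
rewrite (@act_sump _ _ T n (fun j => v j *: A j i)).
by apply: eq_bigr => j _; rewrite actZ.
Qed.

Lemma lemmaA (tf : tfree T) nU nV (fs gs : nat -> X -> K) :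
  (forall j, in_dual (gs j)) ->
  exists d, forall p : {poly K}, (d < size p)%N -> forall u v : nat -> K,
   (forall x, \sum_(i < nU) u i * fs i x +
              act T p (fun y => \sum_(j < nV) v j * gs j y) x = 0) ->
   forall x, \sum_(j < nV) v j * gs j x = 0.
Proof.
move=> dgs.
pose e l := if (l < nU)%N then fs l else gs (l - nU)%N.
have [r [b [c [a [c0 [ind Hs]]]]]] := free_gen T (nU + nV) e.
pose d := \max_(j < nU + nV) \max_(i < r) size (a j i).
have hd : forall j i, (j < nU + nV)%N -> (i < r)%N -> (size (a j i) <= d)%N.
  move=> j i Hj Hi.
  apply: leq_trans (@leq_bigmax _ (fun i : 'I_r => size (a j i)) (Ordinal Hi)) _.
  exact: (@leq_bigmax _ (fun j : 'I_(nU + nV) => \max_(i < r) size (a j i)) (Ordinal Hj)).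
exists d => p hp u v H x.
pose g y := \sum_(j < nV) v j * gs j y.
pose f y := \sum_(j < nU) u j * fs j y.
pose al i := \sum_(j < nV) v j *: a (nU + j)%N i.
pose be i := \sum_(j < nU) u j *: a j i.
have C1 : forall y, act T c g y = \sum_(i < r) act T (al i) (b i) y.
  move=> y; rewrite /g act_comb /al -(@comb_poly nV r v (fun j i => a (nU + j)%N i) b y).
  apply: eq_bigr => j _; congr (_ * _).
  have -> : gs j = e (nU + j)%N by rewrite /e ltnNge leq_addr /= addKn.
  by rewrite Hs // ltn_add2l.
have C2 : forall y, act T c f y = \sum_(i < r) act T (be i) (b i) y.
  move=> y; rewrite /f act_comb /be -(@comb_poly nU r u a b y).
  apply: eq_bigr => j _; congr (_ * _).
  have -> : fs j = e j by rewrite /e ltn_ord.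
  by rewrite Hs // (leq_trans (ltn_ord j)) // leq_addr.
have C3 : forall y, \sum_(i < r) act T (be i + p * al i) (b i) y = 0.
  move=> y.
  have : act T c (fun z => f z + act T p g z) y = 0.
    by rewrite (act_ext _ _ _ H) act_0.
  rewrite act_add C2 -actM mulrC actM (act_ext _ _ _ C1).
  rewrite (@act_sumh _ _ T p r (fun i => act T (al i) (b i))) -big_split /=.
  by move=> H0; rewrite -[RHS]H0; apply: eq_bigr => i _; rewrite actD actM.
have E := ind (fun i => be i + p * al i) C3.
have al0 : forall i, (i < r)%N -> al i = 0.
  move=> i Hi; apply/eqP; apply: contraT => ali.
  have p0 : p != 0 by rewrite -size_poly_gt0 (leq_ltn_trans _ hp).
  have Hpa : p * al i = - be i.
    by apply/eqP; rewrite -addr_eq0 addrC (E i Hi).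
  have : size (p * al i) = size (be i) by rewrite Hpa size_polyN.
  rewrite size_mul // => Hsz.
  have : (size (be i) <= d)%N.
    rewrite /be; apply: (@size_comb_le nU d u (fun j => a j i)) => j Hj; apply: hd => //.
    by rewrite (leq_trans Hj) // leq_addr.
  rewrite -Hsz.
  have ha : (0 < size (al i))%N by rewrite size_poly_gt0.
  move: ha; case: (size (al i)) => // s _; rewrite addnS /= => Hle.
  by have := leq_trans (leq_addr s (size p)) Hle; rewrite leqNgt hp.
apply: (tf g c) => //.
  exact: dual_sum.
move=> y; rewrite C1 big1 // => i _; by rewrite al0 // act0p.
Qed.

End LemmaA.

Section OneFour.
Variables (K : numFieldType) (X : topologicalLmodType K) (T : X -> X).
Hypotheses (linT : linear T) (contT : continuous T).

Definition ext n (F : 'I_n -> X -> K) (l : nat) : X -> K :=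
  if (insub l : option 'I_n) is Some i then F i else (fun _ => 0).

Lemma ext_ord n (F : 'I_n -> X -> K) (i : 'I_n) : ext F i = F i.
Proof. by rewrite /ext valK. Qed.

Lemma ext_dual n (F : 'I_n -> X -> K) : (forall i, in_dual (F i)) ->
  forall l, in_dual (ext F l).
Proof. by move=> H l; rewrite /ext; case: insub => [i|]; [exact: H | exact: dual_0]. Qed.

Lemma Y_dual (Y : set (X -> K)) f : functional_subspace Y -> topology_is_weak_for Y ->
  Y f -> in_dual f.
Proof.
move=> [lY _] wk Yf; split; first exact: lY.
apply/continuousP => W oW; apply/(wk _).2 => x Wx.
exists 1%N, (fun _ => f), (fun _ => W); split => //; split => //; split => //.
by move=> y /(_ ord0).
Qed.

Lemma one_to_four : weak_topology_space X -> tfree T -> poly_mixing_op T.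
Proof.
move=> [Y [fsub [sep wk]]] tf U V oU oV [x0 Ux0] [y0 Vy0].
have [nU [fs [Ws [Yf [oW [Wx0 subU]]]]]] := (wk U).1 oU x0 Ux0.
have [nV [gs [Ws' [Yg [oW' [Wy0 subV]]]]]] := (wk V).1 oV y0 Vy0.
have dfs : forall i, in_dual (fs i) by move=> i; exact: (Y_dual fsub wk).
have dgs : forall i, in_dual (gs i) by move=> i; exact: (Y_dual fsub wk).
have [d Hd] := lemmaA tf nU nV (ext fs) (ext_dual dgs).
exists d => p hp.
pose phi l := if (l < nU)%N then ext fs l else act T p (ext gs (l - nU)%N).
pose c l := if (l < nU)%N then ext fs l x0 else ext gs (l - nU)%N y0.
have split_sum : forall F : nat -> K, \sum_(l < nU + nV) F l =
    \sum_(l < nU) F l + \sum_(l < nV) F (nU + l)%N.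
  by move=> F; rewrite big_split_ord.
have [x Hx] : exists x, forall l, (l < nU + nV)%N -> phi l x = c l.
  apply: solve_sys.
    move=> l; rewrite /phi; case: ifP => _.
      by case: (ext_dual dfs l).
    by case: (dual_act linT contT p (ext_dual dgs (l - nU)%N)).
  move=> w Hw.
  have Hw' : forall x, \sum_(i < nU) w i * ext fs i x +
      act T p (fun y => \sum_(j < nV) w (nU + j)%N * ext gs j y) x = 0.
    move=> x; rewrite (@act_comb _ _ T p nV (fun j => w (nU + j)%N) (ext gs)) -[RHS](Hw x) (@split_sum (fun l => w l * phi l x)).
    congr (_ + _); apply: eq_bigr => i _; rewrite /phi.
      by rewrite ltn_ord.
    by rewrite ltnNge leq_addr /= addKn.
  have H2 := Hd p hp w (fun j => w (nU + j)%N) Hw'.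
  have H1 : forall x, \sum_(i < nU) w i * ext fs i x = 0.
    move=> x; have := Hw' x.
    rewrite (@act_ext _ _ T p _ (fun _ => 0)) ?act_0 ?addr0 //.
  rewrite (@split_sum (fun l => w l * c l)) -[RHS](addr0 0).
  congr (_ + _).
    rewrite -[RHS](H1 x0); apply: eq_bigr => i _; by rewrite /c ltn_ord.
  rewrite -[RHS](H2 y0); apply: eq_bigr => i _.
  by rewrite /c ltnNge leq_addr /= addKn.
exists (poly_op p T x); split.
  exists x => //; apply: subU => i.
  have := Hx i (leq_trans (ltn_ord i) (leq_addr _ _)).
  by rewrite /phi /c ltn_ord !ext_ord => ->.
apply: subV => j.
have := Hx (nU + j)%N; rewrite ltn_add2l ltn_ord /phi /c ltnNge leq_addr /= addKn.
rewrite !ext_ord lf_poly_op; last by case: (dgs j).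
by move=> /(_ isT) ->.
Qed.

End OneFour.

Section Findim.
Variables (K : numFieldType) (X : topologicalLmodType K) (T : X -> X).

Lemma findim_torsion L : nontriv_findim_dual_invariant T L ->
  exists f (q : {poly K}), in_dual f /\ (exists x, f x != 0) /\ q != 0 /\
    forall x, act T q f x = 0.
Proof.
move=> [Ldual [L0 [Lcomb [[n [fs [Lfs span]]] [[f [Lf fnz]] inv]]]]].
have LiT : forall k, L (fun x => f (iter k T x)).
  elim=> [|k IH]; first by have -> : (fun x => f (iter 0 T x)) = f by [].
  have -> : (fun x => f (iter k.+1 T x)) = (fun x => f (iter k T x)) \o T.
    by apply: funext => x /=; rewrite -iterSr.
  exact: inv.
have [C HC] : {C : 'I_n.+1 -> 'I_n -> K & forall k : 'I_n.+1,
    (fun x => f (iter k T x)) = fun x => \sum_(i < n) C k i * fs i x}.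
  apply: (@choice _ _ (fun (k : 'I_n.+1) (c : 'I_n -> K) =>
    (fun x => f (iter k T x)) = fun x => \sum_(i < n) c i * fs i x)) => k.
  exact: span (LiT k).
pose M : 'M[K]_(n.+1, n) := \matrix_(k, i) C k i.
have kM : kermx M != 0.
  rewrite -mxrank_eq0 mxrank_ker subn_eq0 -ltnNge.
  by apply: leq_ltn_trans (rank_leq_col M) _.
have [k0 wk0] : exists k0, row k0 (kermx M) != 0.
  apply: contrapT => Hn; move/negP: kM; apply; apply/eqP/row_matrixP => k.
  by rewrite row0; apply/eqP; apply: contrapT => H; apply: Hn; exists k; apply/negP.
pose w := row k0 (kermx M).
have wM : w *m M = 0 by rewrite /w -row_mul mulmx_ker row0.
have [j0 wj0] : exists j0, w 0 j0 != 0.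
  apply: contrapT => Hn; move/negP: wk0; apply; apply/eqP/rowP => j.
  rewrite [RHS]mxE.
  have : ~~ (w 0 j != 0) by apply/negP => H; apply: Hn; exists j.
  by rewrite negbK => /eqP.
pose q := \poly_(k < n.+1) w 0 (inord k).
have qk : forall k : 'I_n.+1, q`_k = w 0 k.
  by move=> k; rewrite coef_poly ltn_ord inord_val.
have fnz' : exists x, f x != 0.
  apply: contrapT => Hn; apply: fnz; apply: funext => x.
  by apply/eqP; apply: contrapT => H; apply: Hn; exists x; apply/negP.
exists f, q; split; first exact: Ldual.
split => //; split.
  by apply/eqP => q0; move: wj0; rewrite -qk q0 coef0 eqxx.
move=> x; rewrite (act_widen _ _ _ (size_poly _ _)).
transitivity (\sum_(k < n.+1) w 0 k * \sum_(i < n) C k i * fs i x).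
  apply: eq_bigr => k _; rewrite qk; congr (_ * _).
  by have := congr1 (fun h => h x) (HC k).
under eq_bigr do rewrite mulr_sumr.
rewrite exchange_big /= big1 // => i _.
have := congr1 (fun A : 'M[K]_(1, n) => A 0 i) wM; rewrite !mxE => H.
rewrite (eq_bigr (fun k : 'I_n.+1 => (w 0 k * C k i) * fs i x)); last first.
  by move=> k _; rewrite mulrA.
rewrite -mulr_suml.
have -> : \sum_(k < n.+1) w 0 k * C k i = 0.
  rewrite -[RHS]H; apply: eq_bigr => k _; rewrite /M; congr (_ * _).
  exact: (esym (mxE _ _ _ _)).
exact: mul0r.
Qed.
End Findim.

Notation CC R := (R[i] : numFieldType).

Section Eigen.
Variables (R : realType) (K : numFieldType) (X : topologicalLmodType K) (T : X -> X).
Variable iota : {rmorphism K -> R[i]}.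
Hypotheses (linT : linear T) (contT : continuous T) (contI : continuous (fun k : K => (iota k : CC R))).

Definition Pc (g : X -> R[i]) :=
  continuous (g : X -> CC R) /\ forall a x y, g (a *: x + y) = iota a * g x + g y.

Lemma Pc_act r g : Pc g -> Pc (act T r g).
Proof.
move=> [cg lg]; split.
  apply: (@cont_sum X (CC R) _ (fun i x => r`_i * g (iter i T x))) => i.
  have cgi : continuous ((fun x => g (iter i T x)) : X -> CC R).
    by move=> x; apply: continuous_comp; [exact: iterT_cont | exact: cg].
  have := @cont_comb X (CC R) (r`_i) _ (fun _ => 0) cgi (@cont_cst X (CC R) 0).
  by under eq_fun do rewrite addr0.
move=> a x y; rewrite /act mulr_sumr -big_split /=; apply: eq_bigr => i _.
by rewrite iterT_lin // lg; ring.
Qed.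

Lemma Pc0 g : Pc g -> g 0 = 0.
Proof.
move=> [_ lg]; have H := lg 1 0 0; rewrite scaler0 addr0 rmorph1 mul1r in H.
by apply: (addrI (g 0)); rewrite addr0 -H.
Qed.

Lemma Pc_nat g (m : nat) x : Pc g -> g (m%:R *: x) = m%:R * g x.
Proof.
move=> Pg; have := (Pg.2 m%:R x 0); rewrite addr0 Pc0 // addr0 rmorph_nat //.
Qed.

Lemma eigen n : forall (p : {poly R[i]}) g, (size p <= n)%N -> p != 0 -> Pc g ->
  (exists x, g x != 0) -> (forall x, act T p g x = 0) ->
  exists lam g', Pc g' /\ (exists x, g' x != 0) /\ forall x, g' (T x) = lam * g' x.
Proof.
elim: n => [|n IH] p g sp p0 Pg gnz Hp.
  by move: p0; rewrite -size_poly_eq0 -leqn0 sp.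
have [s1|s1] := eqVneq (size p) 1%N.
  have pc := size1_polyC (eq_leq s1).
  have p00 : p`_0 != 0.
    by apply: contra p0 => /eqP h; rewrite pc h.
  case: gnz => x gx; exfalso; move: gx; rewrite -(mulrI_eq0 _ (lregP p00)).
  by rewrite -(actC T) -pc Hp eqxx.
have [z rz] := closed_rootP p s1.
have [q pq] := factor_theorem p z rz.
pose g1 := act T ('X - z%:P) g.
have g1E : forall x, g1 x = g (T x) - z * g x.
  by move=> x; rewrite /g1 actD actX -polyCN actC mulNr.
case: (pselect (exists x, g1 x != 0)) => [g1nz|g1z].
  have q0 : q != 0 by apply: contra p0 => /eqP q0; rewrite pq q0 mul0r.
  apply: (IH q g1) => //.
  - move: sp; rewrite pq size_mul ?polyXsubC_eq0 // size_XsubC addn2 /=.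
    by rewrite ltnS.
  - exact: Pc_act.
  - by move=> x; rewrite /g1 -actM -pq.
exists z, g; split => //; split => // x.
apply/eqP; rewrite -subr_eq0 -g1E; apply/negP => H; apply: g1z; exists x.
by apply/negP.
Qed.

End Eigen.

Section NoTrans.
Variables (R : realType) (K : numFieldType) (X : topologicalLmodType K) (T : X -> X).
Variable iota : {rmorphism K -> R[i]}.
Hypotheses (linT : linear T) (contT : continuous T).

Lemma no_trans (g : X -> R[i]) lam : Pc iota g -> (exists x, g x != 0) ->
  (forall x, g (T x) = lam * g x) -> ~ transitive_op T.
Proof.
move=> Pg [x1 gx1] ge tr.
have giter : forall n x, g (iter n T x) = lam ^+ n * g x.
  by elim=> [|n IH] x; rewrite ?expr0 ?mul1r // iterS ge IH exprS mulrA.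
pose rho := `|g x1|; pose e := rho / 2.
have e0 : 0 < e by rewrite divr_gt0 // normr_gt0.
have rhoe : rho = e + e by rewrite /e -splitr.
have ballE : forall (c : CC R) y, ball c e y <-> `|c - y| < e.
  by move=> c y; rewrite -ball_normE.
pose A := (g : X -> CC R) @^-1` ball (0 : CC R) e.
pose B := (g : X -> CC R) @^-1` ball (g x1 : CC R) e.
have oA : open A := (continuousP (g : X -> CC R)).1 Pg.1 _ (ball_open _ _).
have oB : open B := (continuousP (g : X -> CC R)).1 Pg.1 _ (ball_open _ _).
have A0 : A 0 by rewrite /A /= ballE (Pc0 Pg) subr0 normr0.
have Bx1 : B x1 by rewrite /B /= ballE subrr normr0.
have tri : forall y, rho <= `|g x1 - g y| + `|g y|.
  by move=> y; rewrite /rho -{1}(subrK (g y) (g x1)) ler_normD.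
have [H|H] := orP (real_leVge (normr_real lam) (real1 _)).
  have [n [n0 [y [[x Ax <-] By]]]] := tr A B oA oB (ex_intro _ 0 A0) (ex_intro _ x1 Bx1).
  move: Ax By; rewrite /A /B /= !ballE sub0r normrN => Ax By.
  have Hy : `|g (iter n T x)| < e.
    rewrite giter normrM normrX; apply: le_lt_trans Ax.
    by rewrite ler_piMl // exprn_ile1.
  have := le_lt_trans (tri (iter n T x)) (ltrD By Hy).
  by rewrite -rhoe ltxx.
have [n [n0 [y [[x Bx <-] Ay]]]] := tr B A oB oA (ex_intro _ x1 Bx1) (ex_intro _ 0 A0).
move: Bx Ay; rewrite /A /B /= !ballE sub0r normrN => Bx Ay.
have Hy : `|g x| <= `|g (iter n T x)|.
  by rewrite giter normrM normrX ler_peMl // exprn_ege1.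
have := le_lt_trans (le_trans (tri x) (lerD (lexx _) Hy)) (ltrD Bx Ay).
by rewrite -rhoe ltxx.
Qed.

End NoTrans.

Lemma two_to_one (R : realType) (K : numFieldType) (X : topologicalLmodType K) (T : X -> X)
  (iota : {rmorphism K -> R[i]}) :
  linear T -> continuous T -> continuous (fun k : K => (iota k : CC R)) ->
  transitive_op T -> ~ (exists L, nontriv_findim_dual_invariant T L).
Proof.
move=> linT contT contI tr [L HL].
have [f [q [df [[x1 fx1] [q0 Hq]]]]] := findim_torsion HL.
pose g x := iota (f x).
pose p := map_poly iota q.
have Pg : Pc iota g.
  split.
    move=> x; apply: (@continuous_comp _ _ (CC R) f (fun k : K => (iota k : CC R))).
      exact: df.2.
    exact: contI.
  by move=> a x y; rewrite /g df.1 rmorphD rmorphM.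
have gx1 : g x1 != 0 by rewrite /g fmorph_eq0.
have p0 : p != 0 by rewrite map_poly_eq0.
have Hp : forall x, act T p g x = 0.
  move=> x; transitivity (iota (act T q f x)); last by rewrite Hq rmorph0.
  rewrite /act size_map_poly rmorph_sum; apply: eq_bigr => i _.
  by rewrite coef_map rmorphM.
have [lam [g' [Pg' [nz ge]]]] := eigen linT contT (leqnn (size p)) p0 Pg (ex_intro _ x1 gx1) Hp.
exact: (no_trans Pg' nz ge tr).
Qed.

Lemma poly_op_Xn (K : numFieldType) (X : topologicalLmodType K) (T : X -> X) m x :
  poly_op ('X^m : {poly K}) T x = iter m T x.
Proof.
rewrite /poly_op size_polyXn big_ord_recr /= coefXn eqxx scale1r big1 ?add0r //.
by move=> i _; rewrite coefXn ltn_eqF // scale0r.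
Qed.

Lemma poly_to_mix (K : numFieldType) (X : topologicalLmodType K) (T : X -> X) :
  poly_mixing_op T -> mixing_op T.
Proof.
move=> pm U V oU oV nU nV; have [k Hk] := pm U V oU oV nU nV.
exists k => m km; have := Hk 'X^m; rewrite size_polyXn ltnS => /(_ km).
by have -> : poly_op 'X^m T = iter m T by apply: funext => x; rewrite poly_op_Xn.
Qed.

Lemma mix_to_trans (K : numFieldType) (X : topologicalLmodType K) (T : X -> X) :
  mixing_op T -> transitive_op T.
Proof.
move=> mx U V oU oV nU nV; have [n Hn] := mx U V oU oV nU nV.
by exists n.+1; split => //; apply: Hn.
Qed.

Lemma real_complex_cont (R : realType) : continuous (fun k : R => ((k%:C)%C : CC R)).
Proof.
move=> x; apply/cvgrPdist_lt => e e0.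
have ee : e = ((complex.Re e)%:C)%C.
  by case: e e0 => a b; rewrite ltcE /= => /andP [/eqP -> _].
have Re0 : 0 < complex.Re e by move: e0; rewrite ltcE => /andP [].
have H := (cvgrPdist_lt (@id R) x).1 (@cvg_id _ (nbhs x)) (complex.Re e) Re0.
apply: (filterS _ (H _)) => t /= Ht.
rewrite -rmorphB normc_def /= expr0n addr0 sqrtr_sqr ee ltcR //.
Qed.

Lemma iota_exists (R : realType) b : exists iota : {rmorphism RorC R b -> R[i]},
  continuous (fun k : RorC R b => (iota k : CC R)).
Proof.
case: b.
  exists (real_complex R : {rmorphism R -> R[i]}); exact: real_complex_cont.
exists (idfun : {rmorphism R[i] -> R[i]}); move=> x; exact: cvg_id.
Qed.

Unset Implicit Arguments.

Theorem theorem1p1 (R : realType) (b : bool)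
  (X : topologicalLmodType (RorC R b)) (T : X -> X) :
  hausdorff_space X ->
  weak_topology_space X ->
  linear T -> continuous T ->
  [/\ (~ (exists L, nontriv_findim_dual_invariant T L)) <-> transitive_op T,
      transitive_op T <-> mixing_op T &
      mixing_op T <-> poly_mixing_op T].
Proof.
move=> _ hw linT contT.
have [iota contI] := iota_exists R b.
have A : ~ (exists L, nontriv_findim_dual_invariant T L) -> poly_mixing_op T.
  by move=> h; apply: (one_to_four linT contT hw); exact: tf_of_noL.
have B : transitive_op T -> ~ (exists L, nontriv_findim_dual_invariant T L).
  exact: (two_to_one linT contT contI).
split; split.
- by move=> h; apply: mix_to_trans; apply: poly_to_mix; exact: A.
- exact: B.
- by move=> h; apply: poly_to_mix; apply: A; exact: B.
- exact: mix_to_trans.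
- by move=> h; apply: A; apply: B; exact: mix_to_trans.
- exact: poly_to_mix.
Qed.
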